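(* Let $X\in\mathbb{R}^{N\times d}$, $W\in\mathbb{R}^{d\times m}$, $\Phi=\sigma(XW)$, and let $A\in\mathbb{R}^{m\times m}$ have all entries $A_{ij}\ge0$. Let $\gamma>0$ satisfy $\|A\|<\gamma^{-1}$. Then the unique solution $Z$ of $Z=\sigma(\gamma ZA+\Phi)$ is $Z=\Phi(I_m-\gamma A)^{-1}$.
   Context: $\sigma(u)=\max\{0,u\}$ applied entrywise; $\|\cdot\|$ is the spectral norm. *)

(* Defs.v *)
From HB Require Import structures.
From mathcomp Require Import all_boot all_order all_algebra.
From mathcomp Require Import classical_sets reals.
Set Implicit Arguments. Unset Strict Implicit. Unset Printing Implicit Defensive.
Import Order.TTheory GRing.Theory Num.Theory.
Local Open Scope ring_scope.
Local Open Scope classical_set_scope.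

Definition relu (R : realType) (p q : nat) (M : 'M[R]_(p, q)) : 'M[R]_(p, q) :=
  map_mx (fun u => Num.max 0 u) M.

Definition vnorm2 (R : realType) (n : nat) (v : 'cV[R]_n) : R :=
  Num.sqrt (\sum_(i < n) (v i 0) ^+ 2).

Definition spec_norm (R : realType) (p q : nat) (A : 'M[R]_(p, q)) : R :=
  sup [set vnorm2 (A *m v) | v in [set v : 'cV[R]_q | vnorm2 v <= 1]].

(* Main.v *)
Require Import Defs.
From HB Require Import structures.
From mathcomp Require Import all_boot all_order all_algebra.
From mathcomp Require Import classical_sets reals.
From mathcomp Require Import lra.
Import Order.TTheory GRing.Theory Num.Theory.
Set Implicit Arguments. Unset Strict Implicit. Unset Printing Implicit Defensive.
Local Open Scope ring_scope.

Section H.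
Variable R : realType.

Lemma vnorm_ge0 n (v : 'cV[R]_n) : 0 <= vnorm2 v.
Proof. exact: sqrtr_ge0. Qed.

Lemma vnormZ n (c : R) (v : 'cV[R]_n) : vnorm2 (c *: v) = `|c| * vnorm2 v.
Proof.
rewrite /vnorm2 -sqrtr_sqr -sqrtrM ?sqr_ge0 // mulr_sumr.
by congr Num.sqrt; apply: eq_bigr => i _; rewrite mxE exprMn.
Qed.

Lemma vnorm_entry n (v : 'cV[R]_n) i : `|v i 0| <= vnorm2 v.
Proof.
rewrite /vnorm2 -sqrtr_sqr; apply: ler_wsqrtr.
rewrite (bigD1 i) //= lerDl; apply: sumr_ge0 => j _; exact: sqr_ge0.
Qed.

Lemma vnorm0 n (v : 'cV[R]_n) : vnorm2 v = 0 -> v = 0.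
Proof.
move=> h; apply/matrixP => i j; rewrite (ord1 j) mxE.
by apply/eqP; rewrite -normr_le0 -h vnorm_entry.
Qed.

Lemma vnorm_zero n : vnorm2 (0 : 'cV[R]_n) = 0.
Proof. by rewrite -(scale0r (0 : 'cV[R]_n)) vnormZ normr0 mul0r. Qed.

Lemma specbound p q (A : 'M[R]_(p, q)) :
  has_ubound [set vnorm2 (A *m v) | v in [set v : 'cV[R]_q | vnorm2 v <= 1]].
Proof.
exists (Num.sqrt (\sum_i (\sum_j `|A i j|) ^+ 2)) => _ [v hv <-].
rewrite /vnorm2 ler_sqrt; last by apply: sumr_ge0 => i _; exact: sqr_ge0.
apply: ler_sum => i _; rewrite -real_normK ?num_real //.
have s0 : 0 <= \sum_j `|A i j| by apply: sumr_ge0 => j _.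
rewrite lerXn2r ?nnegrE //.
rewrite mxE; apply: (le_trans (ler_norm_sum _ _ _)); apply: ler_sum => j _.
rewrite normrM ler_piMr //.
exact: le_trans (vnorm_entry v j) (hv : vnorm2 v <= 1).
Qed.

Lemma spec_ge0 p q (A : 'M[R]_(p, q)) : 0 <= spec_norm A.
Proof.
apply: (ub_le_sup (specbound A)); exists 0; first by rewrite /= vnorm_zero.
by rewrite mulmx0 vnorm_zero.
Qed.

Lemma opnorm p q (A : 'M[R]_(p, q)) v : vnorm2 (A *m v) <= spec_norm A * vnorm2 v.
Proof.
have [h|h] := eqVneq (vnorm2 v) 0.
  by rewrite h mulr0 (vnorm0 h) mulmx0 vnorm_zero.
have hp : 0 < vnorm2 v by rewrite lt_def h vnorm_ge0.
have : vnorm2 (A *m ((vnorm2 v)^-1 *: v)) <= spec_norm A.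
  apply: (ub_le_sup (specbound A)); exists ((vnorm2 v)^-1 *: v) => //=.
  by rewrite vnormZ ger0_norm ?invr_ge0 ?vnorm_ge0 // mulVf.
rewrite -scalemxAr vnormZ ger0_norm ?invr_ge0 ?vnorm_ge0 //.
by rewrite ler_pdivrMl // mulrC.
Qed.
End H.

Section H2.
Variable R : realType.

Fixpoint Pw m (B : 'M[R]_m) k : 'M[R]_m :=
  match k with 0 => 1%:M | k.+1 => B *m Pw B k end.

Lemma Pw_norm m (B : 'M[R]_m) c k v : 0 <= c ->
  (forall v, vnorm2 (B *m v) <= c * vnorm2 v) ->
  vnorm2 (Pw B k *m v) <= c ^+ k * vnorm2 v.
Proof.
move=> c0 hB; elim: k => [|k IH] /=; first by rewrite mul1mx expr0 mul1r.
rewrite -mulmxA exprS -mulrA; apply: le_trans (hB _) _.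
exact: ler_wpM2l.
Qed.

Lemma Pw_ge0 m (B : 'M[R]_m) k i j : (forall i j, 0 <= B i j) -> 0 <= Pw B k i j.
Proof.
move=> hB; elim: k i j => [|k IH] i j /=; first by rewrite mxE ler0n.
rewrite mxE; apply: sumr_ge0 => l _; exact: mulr_ge0.
Qed.

Lemma vnorm_delta m (j : 'I_m) : vnorm2 (delta_mx j 0 : 'cV[R]_m) = 1.
Proof.
rewrite /vnorm2 (bigD1 j) //= big1 ?addr0 ?mxE ?eqxx ?expr1n ?sqrtr1 //.
by move=> i hi; rewrite mxE (negbTE hi) expr0n.
Qed.

Lemma Pw_le m (B : 'M[R]_m) c k i j : 0 <= c ->
  (forall v, vnorm2 (B *m v) <= c * vnorm2 v) ->
  Pw B k i j <= c ^+ k.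
Proof.
move=> c0 hB.
have -> : Pw B k i j = (Pw B k *m (delta_mx j 0 : 'cV[R]_m)) i 0.
  rewrite mxE (bigD1 j) //= big1 ?addr0 ?mxE ?eqxx ?mulr1 //.
  by move=> l hl; rewrite mxE (negbTE hl) mulr0.
apply: le_trans (ler_norm _) _; apply: le_trans (vnorm_entry _ _) _.
by apply: le_trans (Pw_norm _ _ c0 hB) _; rewrite vnorm_delta mulr1.
Qed.

Lemma geom (c eps S : R) : 0 <= c -> c < 1 -> 0 < eps -> 0 <= S ->
  exists k, S * c ^+ k < eps.
Proof.
move=> c0 c1 e0 S0.
have [->|cn0] := eqVneq c 0; first by exists 1%N; rewrite expr1 mulr0.
have cp : 0 < c by rewrite lt_def cn0 c0.
set t := c^-1 - 1.
have tp : 0 < t by rewrite /t subr_gt0 invf_gt1.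
have bern : forall k, 1 + k%:R * t <= (1 + t) ^+ k.
  elim=> [|k IH]; first by rewrite mul0r addr0 expr0.
  rewrite exprS -natr1 mulrDl mul1r.
  have h0 : 0 <= (1 + t) ^+ k by apply: exprn_ge0; lra.
  have kp : 0 <= k%:R :> R by apply: ler0n.
  nra.
have hx : 0 <= S / (eps * t) by apply: divr_ge0 => //; apply: mulr_ge0; lra.
exists (Num.Def.archi_bound (S / (eps * t))).
set k := Num.Def.archi_bound _ in hx *.
have hk := archi_boundP hx; rewrite -/k in hk.
have hk2 : S < eps * (k%:R * t).
  by rewrite ltr_pdivrMr in hk; [rewrite mulrCA mulrA; lra|apply: mulr_gt0].
have : S < eps * (c^-1) ^+ k.
  have e1 : 1 + t = c^-1 by rewrite /t addrC subrK.
  have := bern k; rewrite e1 => hb.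
  apply: lt_le_trans hk2 _; apply: ler_wpM2l; [lra|].
  apply: le_trans hb; rewrite addrC; lra.
move=> hS.
have ck : 0 < c ^+ k by exact: exprn_gt0.
move: hS; rewrite -(ltr_pM2r ck) -mulrA -exprMn mulVf // expr1n mulr1; apply.
Qed.
End H2.

Section H3.
Variable R : realType.

Lemma mono_mul N m (X Y : 'M[R]_(N, m)) (M : 'M[R]_m) i j :
  (forall i j, 0 <= M i j) -> (forall i j, X i j <= Y i j) ->
  (X *m M) i j <= (Y *m M) i j.
Proof.
move=> hM hXY; rewrite !mxE; apply: ler_sum => l _; exact: ler_wpM2r.
Qed.

Lemma core N m (B : 'M[R]_m) c (E : 'M[R]_(N, m)) :
  0 <= c -> c < 1 -> (forall i j, 0 <= B i j) ->
  (forall v, vnorm2 (B *m v) <= c * vnorm2 v) ->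
  (forall i j, 0 <= E i j) -> (forall i j, E i j <= (E *m B) i j) -> E = 0.
Proof.
move=> c0 c1 hB hBn hE hEB.
have step : forall k i j, E i j <= (E *m Pw B k) i j.
  elim=> [|k IH] i j /=; first by rewrite mulmx1.
  apply: le_trans (IH i j) _; rewrite mulmxA.
  by apply: mono_mul => // i' j'; exact: Pw_ge0.
apply/matrixP => i j; rewrite mxE; apply/eqP; rewrite eq_le hE andbT.
rewrite leNgt; apply/negP => hpos.
have S0 : 0 <= \sum_l E i l by apply: sumr_ge0 => l _.
have [k hk] := geom c0 c1 hpos S0.
have : E i j <= (\sum_l E i l) * c ^+ k.
  apply: le_trans (step k i j) _; rewrite mxE mulr_suml.
  apply: ler_sum => l _; apply: ler_wpM2l => //; exact: Pw_le.
by move=> h; have := lt_le_trans hk h; rewrite ltxx.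
Qed.
End H3.

Lemma relu_lip (R : realType) (a b : R) :
  `|Num.max 0 a - Num.max 0 b| <= `|a - b|.
Proof.
have h1 := ler_norm (a - b).
have h2 : b - a <= `|a - b| by rewrite distrC ler_norm.
rewrite ler_norml !maxEle; case: (lerP 0 a) => ha; case: (lerP 0 b) => hb;
  apply/andP; split; lra.
Qed.

Lemma relu_entry (R : realType) p q (M1 M2 : 'M[R]_(p, q)) i j :
  `|(relu M1 - relu M2) i j| <= `|(M1 - M2) i j|.
Proof. rewrite !mxE; exact: relu_lip. Qed.

Theorem lemma5 (R : realType) (N d m : nat)
  (X : 'M[R]_(N, d)) (W : 'M[R]_(d, m)) (A : 'M[R]_m) (gamma : R) :
  (forall i j, 0 <= A i j) ->
  0 < gamma ->
  spec_norm A < gamma^-1 ->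
  let Phi := relu (X *m W) in
  (1%:M - gamma *: A) \in unitmx /\
  (forall Z : 'M[R]_(N, m),
     Z = relu (gamma *: (Z *m A) + Phi) <-> Z = Phi *m invmx (1%:M - gamma *: A)).
Proof.
move=> hA gp hs Phi.
set B := gamma *: A.
set c := gamma * spec_norm A.
have c0 : 0 <= c by apply: mulr_ge0; [lra| exact: spec_ge0].
have c1 : c < 1 by rewrite /c; rewrite -(ltr_pM2l gp) mulfV ?gt_eqF in hs.
have hB : forall i j, 0 <= B i j by move=> i j; rewrite mxE; apply: mulr_ge0; [lra|].
have hBn : forall v, vnorm2 (B *m v) <= c * vnorm2 v.
  move=> v; rewrite -scalemxAl vnormZ (gtr0_norm gp) /c -mulrA.
  by apply: ler_wpM2l; [lra| exact: opnorm].
have unitM : (1%:M - B) \in unitmx.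
  rewrite -unitmx_tr -row_free_unit -kermx_eq0; apply/eqP/row_matrixP => r.
  rewrite row0; set u := row r _.
  have hu : u *m (1%:M - B)^T = 0 by apply/sub_kermxP; exact: row_sub.
  have hv : (1%:M - B) *m u^T = 0 by rewrite -(trmxK (_ *m _)) trmx_mul trmxK hu trmx0.
  move: hv; rewrite mulmxBl mul1mx => /eqP; rewrite subr_eq0 => /eqP hv.
  have hn := hBn u^T; rewrite -hv in hn.
  have n0 : vnorm2 u^T = 0.
    have := vnorm_ge0 u^T; nra.
  by rewrite -(trmxK u) (vnorm0 n0) trmx0.
split=> //.
set Z0 := Phi *m invmx (1%:M - B).
have hPhi : forall i j, 0 <= Phi i j by move=> i j; rewrite mxE le_max lexx.
have fix0 : Z0 = Phi + Z0 *m B.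
  have : Z0 *m (1%:M - B) = Phi by rewrite /Z0 mulmxKV.
  by rewrite mulmxBr mulmx1 => <-; rewrite subrK.
have fixe : forall i j, Z0 i j = Phi i j + (Z0 *m B) i j.
  by move=> i j; rewrite {1}fix0 mxE.
have Z0ge : forall i j, 0 <= Z0 i j.
  pose E := map_mx (fun x => Num.max 0 (- x)) Z0.
  have hE : forall i j, 0 <= E i j by move=> i j; rewrite mxE le_max lexx.
  have hEB : forall i j, E i j <= (E *m B) i j.
    move=> i j; rewrite [E i j]mxE ge_max; apply/andP; split.
      by rewrite mxE; apply: sumr_ge0 => l _; apply: mulr_ge0.
    rewrite (fixe i j) opprD; apply: (@le_trans _ _ (- (Z0 *m B) i j)); first by have := hPhi i j; lra.
    rewrite !mxE -sumrN; apply: ler_sum => l _; rewrite -mulNr; apply: ler_wpM2r => //.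
    by rewrite [E i l]mxE le_max lexx orbT.
  have E0 := core c0 c1 hB hBn hE hEB.
  move=> i j; move/matrixP: E0 => /(_ i j); rewrite [E i j]mxE mxE => h.
  by move: h; rewrite mxE => /eqP; rewrite eq_le ge_max oppr_le0 => /andP[/andP[_ ->] _].
have solZ0 : Z0 = relu (gamma *: (Z0 *m A) + Phi).
  rewrite scalemxAr -/B addrC -fix0.
  by apply/matrixP => i j; rewrite [RHS]mxE max_r.
move=> Z; split; last by move=> ->; rewrite -/B.
move=> hZ.
pose E := map_mx (fun x => `|x|) (Z - Z0).
have hE : forall i j, 0 <= E i j by move=> i j; rewrite mxE.
have hEB : forall i j, E i j <= (E *m B) i j.
  move=> i j; rewrite [E i j]mxE.
  have -> : Z - Z0 = relu (gamma *: (Z *m A) + Phi) - relu (gamma *: (Z0 *m A) + Phi).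
    by rewrite -hZ -solZ0.
  apply: le_trans (relu_entry _ _ _ _) _.
  have -> : gamma *: (Z *m A) + Phi - (gamma *: (Z0 *m A) + Phi) = (Z - Z0) *m B.
    by rewrite !scalemxAr -/B mulmxBl opprD addrACA subrr addr0.
  rewrite mxE; apply: le_trans (ler_norm_sum _ _ _) _.
  rewrite [(E *m B) i j]mxE.
  apply: ler_sum => l _; by rewrite normrM [`|B l j|]ger0_norm // [E i l]mxE.
have E0 := core c0 c1 hB hBn hE hEB.
apply/eqP; rewrite -subr_eq0; apply/eqP/matrixP => i j.
move/matrixP: E0 => /(_ i j); rewrite [E i j]mxE [RHS]mxE => /normr0_eq0 ->.
by rewrite mxE.
Qed.
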